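(* In the multi-parameter setting described in the context, for every Kraus representation $\{E_k(\theta)\}$ of the channel, $H(\theta)\le C_E(\theta)$ as $m\times m$ real symmetric matrices, where $C_E(\theta)_{jk}=4\sum_l\mathrm{Re}\,\mathrm{tr}\{E_l^{(j)}(\theta)\rho_0E_l^{(k)}(\theta)^\dagger\}$.
   Context: A multi-parameter quantum channel on density matrices on $\mathbb{C}^d$ is $\rho_0\mapsto\sum_kE_k(\theta)\rho_0E_k(\theta)^\dagger$ with $\theta=(\theta^1,\dots,\theta^m)\in\mathbb{R}^m$, Kraus operators differentiable in $\theta$, $\sum_kE_k^\dagger E_k=I$; a channel may have many Kraus representations. The input is a fixed pure state $\rho_0=|\psi_0\rangle\langle\psi_0|$ with output $\rho_{out}(\theta)$. Write $X^{(j)}=\partial X/\partial\theta^j$. The SLD quantum information matrix is $H(\theta)_{jk}=\mathrm{Re}\,\mathrm{tr}\{\lambda^{(j)}\rho_{out}\lambda^{(k)}\}$, with $\lambda^{(j)}$ a self-adjoint solution of $\partial\rho_{out}/\partial\theta^j=\frac12(\rho_{out}\lambda^{(j)}+\lambda^{(j)}\rho_{out})$. *)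

(* Defs.v *)
From HB Require Import structures.
From mathcomp Require Import all_boot all_order all_algebra.
From mathcomp Require Import all_classical all_reals all_analysis.
From mathcomp Require Import complex.
Set Implicit Arguments.
Unset Strict Implicit.
Unset Printing Implicit Defensive.
Import Order.TTheory GRing.Theory Num.Theory.
Import numFieldNormedType.Exports.
Local Open Scope ring_scope.

Section QuantumDefs.
Context {R : realType}.

Definition adj (p q : nat) (A : 'M[R[i]]_(p, q)) : 'M[R[i]]_(q, p) :=
  \matrix_(i, j) (A j i)^*%C.

Definition ebasis (m : nat) (j : 'I_m) : 'rV[R]_m := delta_mx 0 j.

Definition pderiv (m d : nat) (F : 'rV[R]_m -> 'M[R[i]]_d) (th : 'rV[R]_m)
  (j : 'I_m) : 'M[R[i]]_d :=
  \matrix_(a, b)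
    complex.Complex ('D_(ebasis j) (fun t => complex.Re (F t a b)) th)
            ('D_(ebasis j) (fun t => complex.Im (F t a b)) th).

Definition mx_differentiable (m d : nat) (F : 'rV[R]_m -> 'M[R[i]]_d) :=
  forall (a b : 'I_d) (th : 'rV[R]_m),
    differentiable (fun t => complex.Re (F t a b)) th /\
    differentiable (fun t => complex.Im (F t a b)) th.

Definition is_kraus (n m d : nat) (E : 'I_n -> 'rV[R]_m -> 'M[R[i]]_d) :=
  forall th, \sum_(k < n) adj (E k th) *m E k th = 1%:M.

Definition pure_state (d : nat) (psi : 'cV[R[i]]_d) : 'M[R[i]]_d :=
  psi *m adj psi.

Definition rho_out (n m d : nat) (E : 'I_n -> 'rV[R]_m -> 'M[R[i]]_d)
  (psi : 'cV[R[i]]_d) (th : 'rV[R]_m) : 'M[R[i]]_d :=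
  \sum_(k < n) E k th *m pure_state psi *m adj (E k th).

Definition is_SLD (m d : nat) (rho : 'rV[R]_m -> 'M[R[i]]_d) (th : 'rV[R]_m)
  (j : 'I_m) (lam : 'M[R[i]]_d) :=
  adj lam = lam /\
  pderiv rho th j = (2%:R^-1 : R[i]) *: (rho th *m lam + lam *m rho th).

Definition SLD_info (m d : nat) (rho : 'M[R[i]]_d) (lam : 'I_m -> 'M[R[i]]_d)
  : 'M[R]_m :=
  \matrix_(j, k) complex.Re (\tr (lam j *m rho *m lam k)).

Definition C_E (n m d : nat) (E : 'I_n -> 'rV[R]_m -> 'M[R[i]]_d)
  (psi : 'cV[R[i]]_d) (th : 'rV[R]_m) : 'M[R]_m :=
  \matrix_(j, k) (4%:R * \sum_(l < n)
     complex.Re (\tr (pderiv (E l) th j *m pure_state psi *m adj (pderiv (E l) th k)))).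

Definition loewner_le (m : nat) (A B : 'M[R]_m) :=
  forall v : 'rV[R]_m, (v *m A *m v^T) 0 0 <= (v *m B *m v^T) 0 0.

End QuantumDefs.

(* Main.v *)
Require Import Defs.
From HB Require Import structures.
From mathcomp Require Import all_boot all_order all_algebra.
From mathcomp Require Import all_classical all_reals all_analysis.
From mathcomp Require Import complex.
From mathcomp Require Import ring lra.
Import Order.TTheory GRing.Theory Num.Theory.
Local Open Scope ring_scope.
Set Implicit Arguments.
Unset Strict Implicit.

Section Aux.
Context {R : realType}.
Local Notation Re := (@complex.Re R).
Local Notation Im := (@complex.Im R).

Lemma ReD (x y : R[i]) : Re (x + y) = Re x + Re y. Proof. by case: x; case: y. Qed.
Lemma ImD (x y : R[i]) : Im (x + y) = Im x + Im y. Proof. by case: x; case: y. Qed.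
Lemma ReM (x y : R[i]) : Re (x * y) = Re x * Re y - Im x * Im y. Proof. by case: x; case: y. Qed.
Lemma ImM (x y : R[i]) : Im (x * y) = Re x * Im y + Im x * Re y. Proof. by case: x; case: y. Qed.
Lemma ReJ (x : R[i]) : Re (x^*)%C = Re x. Proof. by case: x. Qed.
Lemma ImJ (x : R[i]) : Im (x^*)%C = - Im x. Proof. by case: x. Qed.
Lemma Re0 : Re 0 = 0. Proof. by []. Qed.
Lemma Im0 : Im 0 = 0. Proof. by []. Qed.
Lemma Re_sum I (r : seq I) (P : pred I) (F : I -> R[i]) :
  Re (\sum_(i <- r | P i) F i) = \sum_(i <- r | P i) Re (F i).
Proof. exact: (big_morph _ ReD Re0). Qed.
Lemma Im_sum I (r : seq I) (P : pred I) (F : I -> R[i]) :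
  Im (\sum_(i <- r | P i) F i) = \sum_(i <- r | P i) Im (F i).
Proof. exact: (big_morph _ ImD Im0). Qed.

Variables (m : nat) (x v : 'rV[R]_m).

Definition cder (f : 'rV[R]_m -> R[i]) (z : R[i]) :=
  is_derive x v (fun t => Re (f t)) (Re z) /\ is_derive x v (fun t => Im (f t)) (Im z).

Lemma cder_ext f g z z' : (forall t, f t = g t) -> z = z' -> cder f z -> cder g z'.
Proof.
move=> fg <-; have -> : g = f by apply: funext => t; rewrite fg.
done.
Qed.
Arguments cder_ext f {g z z'}.

Lemma cder_cst c : cder (fun _ => c) 0.
Proof. split; exact: is_derive_cst. Qed.

Lemma cder_add f g df dg : cder f df -> cder g dg -> cder (fun t => f t + g t) (df + dg).
Proof.
move=> [f1 f2] [g1 g2]; split.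
- have -> : (fun t => Re (f t + g t)) = (fun t => Re (f t)) + (fun t => Re (g t)).
    by apply: funext => t; rewrite ReD.
  rewrite ReD; exact: is_deriveD.
- have -> : (fun t => Im (f t + g t)) = (fun t => Im (f t)) + (fun t => Im (g t)).
    by apply: funext => t; rewrite ImD.
  rewrite ImD; exact: is_deriveD.
Qed.

Lemma cder_sum n (f : 'I_n -> 'rV[R]_m -> R[i]) df :
  (forall i, cder (f i) (df i)) -> cder (fun t => \sum_(i < n) f i t) (\sum_(i < n) df i).
Proof.
elim: n f df => [|n IH] f df H.
  apply: (cder_ext (fun _ => 0)); last exact: cder_cst.
    by move=> t; rewrite big_ord0.
  by rewrite big_ord0.
apply: (cder_ext (fun t => \sum_(i < n) f (widen_ord (leqnSn n) i) t + f ord_max t)); last first.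
  by apply: cder_add; [apply: (IH (fun i => f (widen_ord (leqnSn n) i))) => i; exact: H | exact: H].
  by rewrite big_ord_recr.
by move=> t; rewrite big_ord_recr.
Qed.

Lemma cder_mul f g df dg : cder f df -> cder g dg ->
  cder (fun t => f t * g t) (df * g x + f x * dg).
Proof.
move=> [f1 f2] [g1 g2]; split.
- have -> : (fun t => Re (f t * g t)) = (fun t => Re (f t)) * (fun t => Re (g t))
      - (fun t => Im (f t)) * (fun t => Im (g t)).
    by apply: funext => t; rewrite ReM.
  apply: (is_derive_eq (is_deriveB (is_deriveM f1 g1) (is_deriveM f2 g2))).
  rewrite ReD !ReM /GRing.scale /=; ring.
- have -> : (fun t => Im (f t * g t)) = (fun t => Re (f t)) * (fun t => Im (g t))
      + (fun t => Im (f t)) * (fun t => Re (g t)).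
    by apply: funext => t; rewrite ImM.
  apply: (is_derive_eq (is_deriveD (is_deriveM f1 g2) (is_deriveM f2 g1))).
  rewrite ImD !ImM /GRing.scale /=; ring.
Qed.

Lemma cder_conj f df : cder f df -> cder (fun t => (f t)^*%C) (df^*%C).
Proof.
move=> [f1 f2]; split.
- have -> : (fun t => Re ((f t)^*)%C) = (fun t => Re (f t)).
    by apply: funext => t; rewrite ReJ.
  by rewrite ReJ.
- have -> : (fun t => Im ((f t)^*)%C) = - (fun t => Im (f t)).
    by apply: funext => t; rewrite ImJ.
  rewrite ImJ; exact: is_deriveN.
Qed.


Definition mder p q (F : 'rV[R]_m -> 'M[R[i]]_(p, q)) (D : 'M[R[i]]_(p, q)) :=
  forall a b, cder (fun t => F t a b) (D a b).

Lemma mder_cst p q (A : 'M[R[i]]_(p, q)) : mder (fun _ => A) 0.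
Proof. move=> a b; rewrite mxE; exact: cder_cst. Qed.

Lemma mder_add p q (F G : 'rV[R]_m -> 'M[R[i]]_(p, q)) DF DG :
  mder F DF -> mder G DG -> mder (fun t => F t + G t) (DF + DG).
Proof.
move=> HF HG a b; have h := cder_add (HF a b) (HG a b).
apply: (cder_ext _ _ _ h); last by rewrite mxE.
by move=> t; rewrite mxE.
Qed.

Lemma mder_sum n p q (F : 'I_n -> 'rV[R]_m -> 'M[R[i]]_(p, q)) DF :
  (forall k, mder (F k) (DF k)) -> mder (fun t => \sum_(k < n) F k t) (\sum_(k < n) DF k).
Proof.
move=> HF a b; have h := cder_sum (fun k => HF k a b).
apply: (cder_ext _ _ _ h); last by rewrite summxE.
by move=> t; rewrite summxE.
Qed.

Lemma mder_mul p q r (F : 'rV[R]_m -> 'M[R[i]]_(p, q)) (G : 'rV[R]_m -> 'M[R[i]]_(q, r)) DF DG :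
  mder F DF -> mder G DG -> mder (fun t => F t *m G t) (DF *m G x + F x *m DG).
Proof.
move=> HF HG a b; have h := cder_sum (fun c => cder_mul (HF a c) (HG c b)).
apply: (cder_ext _ _ _ h); last by rewrite !mxE -big_split.
by move=> t; rewrite mxE.
Qed.

Lemma mder_adj p q (F : 'rV[R]_m -> 'M[R[i]]_(p, q)) DF :
  mder F DF -> mder (fun t => adj (F t)) (adj DF).
Proof.
move=> HF a b; have h := cder_conj (HF b a).
apply: (cder_ext _ _ _ h); last by rewrite mxE.
by move=> t; rewrite mxE.
Qed.

End Aux.

Lemma pderiv_mder {R : realType} m d (F : 'rV[R]_m -> 'M[R[i]]_d) th j D :
  mder th (ebasis j) F D -> pderiv F th j = D.
Proof.
move=> H; apply/matrixP => a b; rewrite mxE.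
case: (H a b) => [[_ ->] [_ ->]]; by case: (D a b).
Qed.

Lemma mder_diff {R : realType} m d (F : 'rV[R]_m -> 'M[R[i]]_d) th j :
  mx_differentiable F -> mder th (ebasis j) F (pderiv F th j).
Proof.
move=> HF a b; split; rewrite mxE /=; apply: derivableP; apply: diff_derivable.
  exact: (HF a b th).1.
exact: (HF a b th).2.
Qed.

Lemma mder_eqD {R : realType} m p q (x v : 'rV[R]_m) (F : 'rV[R]_m -> 'M[R[i]]_(p, q)) D D' :
  mder x v F D -> D = D' -> mder x v F D'.
Proof. by move=> h <-. Qed.

Section Alg.
Context {R : realType}.
Local Notation Re := (@complex.Re R).
Local Notation Im := (@complex.Im R).

Lemma dagM p q r (A : 'M[R[i]]_(p, q)) (B : 'M[R[i]]_(q, r)) :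
  adj (A *m B) = adj B *m adj A.
Proof.
apply/matrixP=> a b; rewrite !mxE rmorph_sum; apply: eq_bigr => k _.
by rewrite !mxE rmorphM mulrC.
Qed.

Lemma dagD p q (A B : 'M[R[i]]_(p, q)) : adj (A + B) = adj A + adj B.
Proof. by apply/matrixP=> a b; rewrite !mxE rmorphD. Qed.

Lemma dagZ p q (c : R[i]) (A : 'M[R[i]]_(p, q)) : adj (c *: A) = (c^*)%C *: adj A.
Proof. by apply/matrixP=> a b; rewrite !mxE rmorphM. Qed.

Lemma dag_sum n p q (F : 'I_n -> 'M[R[i]]_(p, q)) :
  adj (\sum_(k < n) F k) = \sum_(k < n) adj (F k).
Proof. by apply/matrixP=> a b; rewrite !mxE summxE rmorph_sum summxE; apply: eq_bigr => k _; rewrite mxE. Qed.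

Lemma conj_real (r : R) : ((r%:C%C)^*)%C = r%:C%C :> R[i].
Proof. by rewrite /= oppr0. Qed.

Lemma tr_adj_ge0 p q (A : 'M[R[i]]_(p, q)) : 0 <= Re (\tr (A *m adj A)).
Proof.
rewrite /mxtrace (big_morph _ (@ReD R) (@Re0 R)); apply: sumr_ge0 => a _.
rewrite mxE (big_morph _ (@ReD R) (@Re0 R)); apply: sumr_ge0 => b _.
rewrite mxE; case: (A a b) => x y /=; nra.
Qed.

Lemma quadE m (M : 'M[R]_m) (v : 'rV[R]_m) :
  (v *m M *m v^T) 0 0 = \sum_(j < m) \sum_(k < m) v 0 j * M j k * v 0 k.
Proof.
rewrite mxE exchange_big; apply: eq_bigr => k _.
by rewrite !mxE mulr_suml; apply: eq_bigr => j _.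
Qed.

Lemma trS n d (A : 'I_n -> 'M[R[i]]_d) : \tr (\sum_(k < n) A k) = \sum_(k < n) \tr (A k).
Proof. exact: (big_morph _ (@mxtraceD _ _) (@mxtrace0 _ _)). Qed.

Lemma bilinE m d (c : 'I_m -> R[i]) (F G : 'I_m -> 'M[R[i]]_d) Q :
  \tr ((\sum_(j < m) c j *: F j) *m Q *m (\sum_(k < m) c k *: G k)) =
  \sum_(j < m) \sum_(k < m) c j * c k * \tr (F j *m Q *m G k).
Proof.
rewrite !mulmx_suml trS; apply: eq_bigr => j _.
rewrite mulmx_sumr trS; apply: eq_bigr => k _.
by rewrite -!scalemxAl -scalemxAr !mxtraceZ mulrA.
Qed.

Lemma Re_real2 (a b : R) (z : R[i]) : Re (a%:C%C * b%:C%C * z) = a * b * Re z.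
Proof. case: z => x y /=. ring. Qed.

End Alg.

Lemma ReN {R : realType} (z : R[i]) : complex.Re (- z) = - complex.Re z.
Proof. by case: z. Qed.

Lemma Re_natl {R : realType} (k : nat) (z : R[i]) :
  complex.Re (k%:R * z) = k%:R * complex.Re z.
Proof.
rewrite !mulr_natl; elim: k => [|k IH]; first by rewrite !mulr0n.
by rewrite !mulrS ReD IH.
Qed.

Section Key.
Context {R : realType}.

Lemma key d (L E D P : 'M[R[i]]_d) : adj L = L ->
 \tr ((L *m E + (-2%:R) *: D) *m P *m adj (L *m E + (-2%:R) *: D)) =
 \tr (L *m (E *m P *m adj E) *m L) - 2%:R * \tr ((D *m P *m adj E + E *m P *m adj D) *m L)
  + 4%:R * \tr (D *m P *m adj D).
Proof.
move=> hL.
have c2 : ((- 2%:R : R[i])^*)%C = -2%:R by rewrite rmorphN rmorph_nat.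
rewrite dagD dagZ dagM hL c2.
rewrite !mulmxDl !mulmxDr -!scalemxAl -!scalemxAr !mxtraceD !mxtraceZ !mulmxA.
have e1 : \tr (L *m E *m P *m adj D) = \tr (E *m P *m adj D *m L).
  by rewrite -!mulmxA mxtrace_mulC !mulmxA.
rewrite e1; ring.
Qed.

End Key.

Unset Implicit Arguments.
Set Strict Implicit.

Theorem lemma12 (R : realType) (n m d : nat)
  (E : 'I_n -> 'rV[R]_m -> 'M[R[i]]_d) (psi0 : 'cV[R[i]]_d)
  (th : 'rV[R]_m) (lam : 'I_m -> 'M[R[i]]_d) :
  adj psi0 *m psi0 = 1%:M ->
  is_kraus E ->
  (forall k, mx_differentiable (E k)) ->
  (forall j, is_SLD (rho_out E psi0) th j (lam j)) ->
  loewner_le (SLD_info (rho_out E psi0 th) lam) (C_E E psi0 th).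
Proof.
move=> _ _ HE HS v.
pose P := pure_state psi0.
pose c j := (v 0 j)%:C%C : R[i].
pose dE k j := pderiv (E k) th j.
pose L := \sum_(j < m) c j *: lam j.
pose D k := \sum_(j < m) c j *: dE k j.
have hder : forall j, pderiv (rho_out E psi0) th j =
    \sum_(k < n) (dE k j *m P *m adj (E k th) + E k th *m P *m adj (dE k j)).
  move=> j; apply: pderiv_mder.
  have h := mder_sum (fun k => mder_mul (mder_mul (mder_diff th j (HE k))
               (mder_cst th (ebasis j) P)) (mder_adj (mder_diff th j (HE k)))).
  apply: (mder_eqD h); apply: eq_bigr => k _; by rewrite mulmx0 addr0.
have hcr : forall j, ((c j)^*)%C = c j by move=> j; rewrite /c conj_real.
have hL : adj L = L.
  rewrite /L dag_sum; apply: eq_bigr => j _; by rewrite dagZ hcr (HS j).1.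
have hD : forall k, adj (D k) = \sum_(j < m) c j *: adj (dE k j).
  move=> k; rewrite /D dag_sum; apply: eq_bigr => j _; by rewrite dagZ hcr.
set rho := rho_out E psi0 th.
have hG : \sum_(k < n) (D k *m P *m adj (E k th) + E k th *m P *m adj (D k))
    = (2%:R^-1 : R[i]) *: (rho *m L + L *m rho).
  transitivity (\sum_(j < m) c j *: pderiv (rho_out E psi0) th j).
    under [RHS]eq_bigr do rewrite hder scaler_sumr.
    rewrite exchange_big; apply: eq_bigr => k _.
    rewrite hD /D !mulmx_suml mulmx_sumr -big_split; apply: eq_bigr => j _.
    by rewrite -!scalemxAl -scalemxAr scalerDr.
  under eq_bigr do rewrite (HS _).2.
  rewrite /L mulmx_sumr mulmx_suml -big_split scaler_sumr; apply: eq_bigr => j _.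
  by rewrite scalerA mulrC -scalerA scalerDr scalemxAr scalemxAl.
have eL : L = \sum_(j < m) c j *: lam j by [].
have eD : forall k, D k = \sum_(j < m) c j *: dE k j by [].
clearbody L D.
pose X k := L *m E k th + (-2%:R) *: D k.
pose T := \tr (L *m rho *m L).
pose K := \sum_(k < n) \tr (D k *m P *m adj (D k)).
have hsum : \sum_(k < n) \tr (X k *m P *m adj (X k)) = 4%:R * K - T.
  under eq_bigr do rewrite key //.
  rewrite big_split /= sumrB -!mulr_sumr.
  have ha : \sum_(k < n) \tr (L *m (E k th *m P *m adj (E k th)) *m L) = T.
    by rewrite /T /rho /rho_out mulmx_sumr mulmx_suml trS.
  have hb : \sum_(k < n) \tr ((D k *m P *m adj (E k th) + E k th *m P *m adj (D k)) *m L) = T.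
    rewrite -trS -mulmx_suml hG -scalemxAl mxtraceZ mulmxDl mxtraceD.
    have -> : \tr (rho *m L *m L) = T by rewrite mxtrace_mulC mulmxA.
    by rewrite -/T -mulr2n -(mulr_natl T 2) mulrA mulVf ?mul1r // pnatr_eq0.
  rewrite ha hb /K; ring.
have hpos : 0 <= complex.Re (\sum_(k < n) \tr (X k *m P *m adj (X k))).
  rewrite Re_sum; apply: sumr_ge0 => k _.
  rewrite /P /pure_state !mulmxA -(mulmxA (X k *m psi0)) -dagM; exact: tr_adj_ge0.
have hReT : complex.Re T = (v *m SLD_info rho lam *m v^T) 0 0.
  rewrite quadE /T eL bilinE Re_sum; apply: eq_bigr => j _.
  rewrite Re_sum; apply: eq_bigr => k _; rewrite Re_real2 mxE; ring.
have hReK : complex.Re K = \sum_(l < n) \sum_(j < m) \sum_(k < m)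
    v 0 j * v 0 k * complex.Re (\tr (dE l j *m P *m adj (dE l k))).
  rewrite /K Re_sum; apply: eq_bigr => l _.
  rewrite hD eD bilinE Re_sum; apply: eq_bigr => j _.
  rewrite Re_sum; apply: eq_bigr => k _; by rewrite Re_real2.
have hC : (v *m C_E E psi0 th *m v^T) 0 0 = 4%:R * complex.Re K.
  rewrite hReK quadE mulr_sumr.
  under [RHS]eq_bigr do rewrite mulr_sumr.
  rewrite [RHS]exchange_big; apply: eq_bigr => j _.
  under [RHS]eq_bigr do rewrite mulr_sumr.
  rewrite [RHS]exchange_big; apply: eq_bigr => k _.
  rewrite mxE mulr_sumr mulr_sumr mulr_suml; apply: eq_bigr => l _.
  rewrite /dE /P; ring.
move: hpos; rewrite hsum ReD ReN Re_natl -hReT -hC subr_ge0 => h; exact: h.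
Qed.
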